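(* Let $N\ge2$, $T=\{x\in\mathbb{R}^N:1<|x|<2\}$, $2<p<2^*$ ($2^*=\frac{2N}{N-2}$ if $N\ge3$, $+\infty$ if $N=2$), and for $\lambda>0$ let $u_\lambda$ be the unique positive solution in $H^1_{0,rad}(T)$ of $-\Delta u+\lambda u=u^{p-1}$ in $T$, $u=0$ on $\partial T$. Then $$0<\liminf_{\lambda\to+\infty}\frac{\lambda}{\|u_\lambda\|_{L^\infty}^{p-2}}\le\limsup_{\lambda\to+\infty}\frac{\lambda}{\|u_\lambda\|_{L^\infty}^{p-2}}\le 1.$$ *)

(* Defs.v *)
From Stdlib Require Import Reals.
From Coquelicot Require Import Coquelicot.
Open Scope R_scope.

Definition subcritical (N : nat) (p : R) : Prop :=
  2 < p /\ (N = 2%nat \/ p < 2 * INR N / (INR N - 2)).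

(* v : R -> R is the radial profile (u(x) = v(|x|)) of a positive classical
   solution of  -Δu + lam u = u^(p-1) in T = {1 < |x| < 2}, u = 0 on ∂T. *)
Definition radial_pos_solution (N : nat) (p lam : R) (v : R -> R) : Prop :=
  (forall r, 1 < r < 2 ->
     ex_derive v r /\ ex_derive (Derive v) r /\ 0 < v r /\
     - Derive_n v 2 r - (INR N - 1) / r * Derive v r + lam * v r
       = Rpower (v r) (p - 1)) /\
  filterlim v (at_right 1) (locally 0) /\
  filterlim v (at_left 2) (locally 0).

Definition Linf_norm (v : R -> R) : R :=
  real (Lub_Rbar (fun y => exists r, 1 < r < 2 /\ y = Rabs (v r))).

(* Main.v *)
Require Import Defs.
From Stdlib Require Import Reals Lra Classical.
From Coquelicot Require Import Coquelicot.
Open Scope R_scope.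
Lemma dplus (f g : R -> R) x df dg : is_derive f x df -> is_derive g x dg -> is_derive (fun y => f y + g y) x (df + dg).
Proof. intros. apply (is_derive_plus f g); auto. Qed.
Lemma dminus (f g : R -> R) x df dg : is_derive f x df -> is_derive g x dg -> is_derive (fun y => f y - g y) x (df - dg).
Proof. intros. apply (is_derive_minus f g); auto. Qed.
Lemma dmult (f g : R -> R) x df dg : is_derive f x df -> is_derive g x dg -> is_derive (fun y => f y * g y) x (df * g x + f x * dg).
Proof. intros. apply (is_derive_mult f g); auto. intros; apply Rmult_comm. Qed.
Lemma dext (f : R -> R) (x d d' : R) : is_derive f x d -> d = d' -> is_derive f x d'.
Proof. intros H ->; exact H. Qed.

Lemma deriv_cont (f : R -> R) (x l : R) : is_derive f x l -> continuity_pt f x.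
Proof.
  intro H. apply continuity_pt_filterlim. apply (ex_derive_continuous (K:=R_AbsRing) (V:=R_NormedModule)). exists l. exact H.
Qed.

Lemma mono_nonincr (g dg : R -> R) s t : s <= t ->
  (forall x, s <= x <= t -> is_derive g x (dg x)) ->
  (forall x, s <= x <= t -> dg x <= 0) -> g t <= g s.
Proof.
  intros Hst Hd Hn.
  destruct (MVT_gen g s t dg) as [c [Hc Heq]].
  - rewrite Rmin_left, Rmax_right by lra. intros x Hx. apply Hd. lra.
  - rewrite Rmin_left, Rmax_right by lra. intros x Hx. apply (deriv_cont _ _ (dg x)). apply Hd; lra.
  - rewrite Rmin_left, Rmax_right in Hc by lra.
    assert (dg c <= 0) by (apply Hn; lra).
    assert (dg c * (t - s) <= 0) by (apply Rmult_le_0_r; lra). lra.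
Qed.

Lemma hit (f f1 f2 : R -> R) a d M K Q :
  0 < d -> 0 < M ->
  (forall x, a <= x <= a + 5*d -> is_derive f x (f1 x) /\ is_derive f1 x (f2 x)) ->
  (forall x, a <= x <= a + 5*d -> f x <= M) ->
  f a = M -> f1 a = 0 ->
  (forall x, a <= x <= a + 5*d -> f2 x <= K) ->
  (forall x, a <= x <= a + 5*d -> M/2 <= f x -> f2 x <= - Q) ->
  M < Q*d*d -> 8*K*d*d < M ->
  exists x, a <= x <= a + 5*d /\ f x < 0.
Proof.
  intros Hd HM Hder Hle Hfa Hf1a HK HQ HQd HKd.
  assert (Hc : exists c, a <= c <= a + d /\ f c < M/2).
  { apply NNPP. intro Hno.
    assert (Hge : forall x, a <= x <= a + d -> M/2 <= f x).
    { intros x Hx. apply Rnot_lt_le. intro Hlt. apply Hno. exists x. split; [exact Hx|exact Hlt]. }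
    assert (Hg : forall x, a <= x <= a + d -> f1 x <= - Q * (x - a)).
    { intros x Hx.
      assert (H := mono_nonincr (fun y => f1 y + Q * (y - a)) (fun y => f2 y + Q) a x ltac:(lra)).
      simpl in H. rewrite Hf1a in H.
      assert (f1 x + Q * (x - a) <= 0 + Q * (a - a)); [|lra].
      apply H.
      - intros y Hy. apply dplus. apply (proj2 (Hder y ltac:(lra))).
        auto_derive. auto. ring.
      - intros y Hy. assert (f2 y <= - Q) by (apply HQ; [lra| apply Hge; lra]). lra. }
    assert (H := mono_nonincr (fun y => f y + Q * ((y - a) * (y - a)) / 2)
                   (fun y => f1 y + Q * (y - a)) a (a + d) ltac:(lra)).
    simpl in H. rewrite Hfa in H.
    assert (f (a + d) + Q * ((a + d - a) * (a + d - a)) / 2 <= M + Q * ((a - a) * (a - a)) / 2).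
    { apply H.
      - intros y Hy. apply dplus. apply (proj1 (Hder y ltac:(lra))).
        auto_derive. auto. field.
      - intros y Hy. assert (f1 y <= - Q * (y - a)) by (apply Hg; lra). lra. }
    assert (M / 2 <= f (a + d)) by (apply Hge; lra).
    nra. }
  destruct Hc as [c [Hc1 Hc2]].
  assert (Hac : a < c).
  { destruct (Req_dec a c) as [E|E]. subst c. lra. lra. }
  destruct (MVT_gen f a c f1) as [xi [Hxi Heq]].
  - rewrite Rmin_left, Rmax_right by lra. intros x Hx. apply Hder. lra.
  - rewrite Rmin_left, Rmax_right by lra. intros x Hx. apply (deriv_cont _ _ (f1 x)). apply Hder; lra.
  - rewrite Rmin_left, Rmax_right in Hxi by lra.
    assert (Hneg : f1 xi * (c - a) < - M / 2) by lra.
    assert (Hf1n : f1 xi < 0).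
    { destruct (Rlt_or_le (f1 xi) 0) as [h|h]; [exact h|].
      assert (0 <= f1 xi * (c - a)) by (apply Rmult_le_pos; lra). lra. }
    assert (Hf1d : f1 xi * d < - M / 2) by nra.
    assert (Hm : forall y, xi <= y <= xi + 4*d -> f1 y - K * y <= f1 xi - K * xi).
    { intros y Hy.
      apply (mono_nonincr (fun z => f1 z - K * z) (fun z => f2 z - K) xi y ltac:(lra)).
      - intros z Hz. apply dminus. apply (proj2 (Hder z ltac:(lra))).
        auto_derive. auto. ring.
      - intros z Hz. assert (f2 z <= K) by (apply HK; lra). lra. }
    assert (Hk := mono_nonincr (fun y => f y - f1 xi * (y - xi) - K * ((y - xi) * (y - xi)) / 2)
                   (fun y => f1 y - f1 xi - K * (y - xi)) xi (xi + 4 * d) ltac:(lra)).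
    simpl in Hk.
    assert (f (xi + 4 * d) - f1 xi * (xi + 4 * d - xi) - K * ((xi + 4 * d - xi) * (xi + 4 * d - xi)) / 2
            <= f xi - f1 xi * (xi - xi) - K * ((xi - xi) * (xi - xi)) / 2).
    { apply Hk.
      - intros y Hy. apply dminus. apply dminus. apply (proj1 (Hder y ltac:(lra))).
        auto_derive. auto. field. auto_derive. auto. field.
      - intros y Hy. assert (H := Hm y Hy). lra. }
    assert (f xi <= M) by (apply Hle; lra).
    exists (xi + 4 * d). split. lra. nra.
Qed.


Lemma Rpower_pos x y : 0 < Rpower x y.
Proof. unfold Rpower. apply exp_pos. Qed.

Lemma Rpower_split x y : 0 < x -> Rpower x (y + 1) = Rpower x y * x.
Proof. intro H. rewrite Rpower_plus, Rpower_1 by exact H. reflexivity. Qed.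

Lemma d_Rpower (v : R -> R) r d p : 0 < v r -> is_derive v r d ->
  is_derive (fun y => Rpower (v y) p) r (p * Rpower (v r) (p - 1) * d).
Proof.
  intros Hv Hd.
  assert (H1 : is_derive (fun x => exp (p * ln x)) (v r) (exp (p * ln (v r)) * (p * / v r))).
  { auto_derive. exact Hv. field. lra. }
  apply dext with (scal d (exp (p * ln (v r)) * (p * / v r))).
  - apply (is_derive_comp (fun x => exp (p * ln x)) v r). exact H1. exact Hd.
  - change (scal d ?x) with (d * x).
    replace (exp (p * ln (v r))) with (Rpower (v r) (p - 1 + 1)) by (unfold Rpower; f_equal; ring).
    rewrite Rpower_split by exact Hv.
    assert (E : forall a b c e : R, e <> 0 -> c * (a * e * (p * / e)) = p * a * c) by (intros; field; auto).
    apply (E (Rpower (v r) (p-1)) 0 d (v r)). apply Rgt_not_eq. exact Hv.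
Qed.

Lemma dconst (c x : R) : is_derive (fun _ : R => c) x 0.
Proof. auto_derive; auto. Qed.
Lemma ddiv (f : R -> R) x d k : is_derive f x d -> is_derive (fun y => f y / k) x (d / k).
Proof.
  intro H. apply dext with (d * / k + f x * 0).
  apply (dmult f (fun _ => / k)). exact H. apply dconst. unfold Rdiv. ring.
Qed.
Lemma dscl (f : R -> R) x d k : is_derive f x d -> is_derive (fun y => k * f y) x (k * d).
Proof.
  intro H. apply dext with (0 * f x + k * d).
  apply (dmult (fun _ => k) f). apply dconst. exact H. ring.
Qed.


Lemma sol_facts N p lam v : radial_pos_solution N p lam v ->
  forall r, 1 < r < 2 ->
    is_derive v r (Derive v r) /\ is_derive (Derive v) r (Derive (Derive v) r) /\ 0 < v r /\
    Derive (Derive v) r = lam * v r - Rpower (v r) (p - 1) - (INR N - 1) / r * Derive v r.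
Proof.
  intros [H _] r Hr. destruct (H r Hr) as [H1 [H2 [H3 H4]]].
  split. apply Derive_correct; exact H1.
  split. apply Derive_correct; exact H2.
  split. exact H3.
  change (Derive_n v 2 r) with (Derive (Derive v) r) in H4. lra.
Qed.

Lemma lim_at1 N p lam v : radial_pos_solution N p lam v ->
  forall eps, 0 < eps -> exists a, 1 < a <= 3/2 /\ forall x, 1 < x <= a -> v x < eps.
Proof.
  intros [_ [H _]] eps He.
  destruct (proj1 (filterlim_locally v 0) H (mkposreal eps He)) as [d Hd].
  exists (1 + Rmin d 1 / 2).
  assert (0 < d) by apply cond_pos.
  assert (0 < Rmin d 1) by (apply Rmin_pos; lra).
  assert (Rmin d 1 <= 1) by apply Rmin_r.
  assert (Rmin d 1 <= d) by apply Rmin_l.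
  split. lra.
  intros x Hx. assert (Hb := Hd x). simpl in Hb.
  assert (Rabs (v x - 0) < eps).
  { apply Hb. 2: lra. change (Rabs (x - 1) < d). rewrite Rabs_right; lra. }
  rewrite Rminus_0_r in H4. apply Rabs_lt_between in H4. lra.
Qed.

Lemma lim_at2 N p lam v : radial_pos_solution N p lam v ->
  forall eps, 0 < eps -> exists b, 3/2 <= b < 2 /\ forall x, b <= x < 2 -> v x < eps.
Proof.
  intros [_ [_ H]] eps He.
  destruct (proj1 (filterlim_locally v 0) H (mkposreal eps He)) as [d Hd].
  exists (2 - Rmin d 1 / 2).
  assert (0 < d) by apply cond_pos.
  assert (0 < Rmin d 1) by (apply Rmin_pos; lra).
  assert (Rmin d 1 <= 1) by apply Rmin_r.
  assert (Rmin d 1 <= d) by apply Rmin_l.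
  split. lra.
  intros x Hx. assert (Hb := Hd x). simpl in Hb.
  assert (Rabs (v x - 0) < eps).
  { apply Hb. 2: lra. change (Rabs (x - 2) < d). rewrite Rabs_left; lra. }
  rewrite Rminus_0_r in H4. apply Rabs_lt_between in H4. lra.
Qed.

Lemma max_exists N p lam v : radial_pos_solution N p lam v ->
  exists r0, 1 < r0 < 2 /\ forall r, 1 < r < 2 -> v r <= v r0.
Proof.
  intro Hv.
  assert (Hm : 0 < v (3/2)) by (apply (sol_facts N p lam v Hv); lra).
  destruct (lim_at1 N p lam v Hv _ Hm) as [a [Ha Ha']].
  destruct (lim_at2 N p lam v Hv _ Hm) as [b [Hb Hb']].
  destruct (continuity_ab_maj v a b ltac:(lra)) as [r0 [H1 H2]].
  - intros c Hc. apply (deriv_cont _ _ (Derive v c)). apply (sol_facts N p lam v Hv). lra.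
  - exists r0. split. lra.
    assert (v (3/2) <= v r0) by (apply H1; lra).
    intros r Hr.
    destruct (Rle_lt_dec r a). assert (v r < v (3/2)) by (apply Ha'; lra). lra.
    destruct (Rle_lt_dec b r). assert (v r < v (3/2)) by (apply Hb'; lra). lra.
    apply H1; lra.
Qed.

Lemma Linf_eq v r0 : 1 < r0 < 2 -> 0 < v r0 -> (forall r, 1 < r < 2 -> 0 < v r /\ v r <= v r0) ->
  Linf_norm v = v r0.
Proof.
  intros Hr0 Hp H. unfold Linf_norm.
  rewrite (is_lub_Rbar_unique _ (Finite (v r0))). reflexivity.
  split.
  - intros y [r [Hr ->]]. simpl. destruct (H r Hr). rewrite Rabs_right; lra.
  - intros b Hb. apply Hb. exists r0. split. exact Hr0. rewrite Rabs_right; lra.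
Qed.

Lemma deriv_zero_max N p lam v r0 : radial_pos_solution N p lam v -> 1 < r0 < 2 ->
  (forall r, 1 < r < 2 -> v r <= v r0) -> Derive v r0 = 0.
Proof.
  intros Hv Hr H.
  assert (Hd : ex_derive v r0) by (exists (Derive v r0); apply (sol_facts N p lam v Hv); lra).
  rewrite <- (Derive_Reals v r0 (ex_derive_Reals_0 v r0 Hd)).
  apply (deriv_maximum v 1 2). lra. lra. intros. apply H. lra.
Qed.


Definition En p lam (v : R -> R) r :=
  Derive v r * Derive v r / 2 + Rpower (v r) p / p - lam * (v r * v r) / 2.

Lemma En_deriv N p lam v r : 2 < p -> radial_pos_solution N p lam v -> 1 < r < 2 ->
  is_derive (En p lam v) r (-(INR N - 1) / r * (Derive v r * Derive v r)).
Proof.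
  intros Hp Hv Hr. destruct (sol_facts N p lam v Hv r Hr) as [H1 [H2 [H3 H4]]].
  unfold En.
  apply dext with (Derive v r * Derive (Derive v) r + p * Rpower (v r) (p - 1) * Derive v r / p
                   - lam * (Derive v r * v r)).
  - apply dminus. apply dplus.
    + apply dext with ((Derive (Derive v) r * Derive v r + Derive v r * Derive (Derive v) r) / 2).
      apply (ddiv (fun y => Derive v y * Derive v y)). apply dmult; exact H2. field.
    + apply (ddiv (fun y => Rpower (v y) p)). apply d_Rpower; assumption.
    + apply dext with (lam * (Derive v r * v r + v r * Derive v r) / 2).
      apply (ddiv (fun y => lam * (v y * v y))).
      apply (dscl (fun y => v y * v y)). apply dmult; exact H1. field.
  - rewrite H4. field. split; lra.
Qed.

Lemma INR_N1 N : (2 <= N)%nat -> 1 <= INR N - 1.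
Proof. intro H. apply le_INR in H. simpl in H. lra. Qed.

Lemma En_noninc N p lam v s t : (2 <= N)%nat -> 2 < p -> radial_pos_solution N p lam v ->
  1 < s -> s <= t -> t < 2 -> En p lam v t <= En p lam v s.
Proof.
  intros HN Hp Hv Hs Hst Ht.
  apply (mono_nonincr _ (fun r => -(INR N - 1) / r * (Derive v r * Derive v r))). exact Hst.
  - intros x Hx. apply (En_deriv N). exact Hp. exact Hv. lra.
  - intros x Hx. assert (H := INR_N1 N HN).
    assert (0 <= Derive v x * Derive v x) by nra.
    assert (0 <= (INR N - 1) / x) by (apply Rdiv_le_0_compat; lra).
    unfold Rdiv in *. nra.
Qed.

Lemma G_nondec N p lam v M s t : (2 <= N)%nat -> 2 < p -> 0 < lam -> radial_pos_solution N p lam v ->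
  (forall r, 1 < r < 2 -> v r <= M) ->
  1 < s -> s <= t -> t < 2 ->
  (En p lam v s + lam * (M * M) / 2) * exp (2 * (INR N - 1) * s)
  <= (En p lam v t + lam * (M * M) / 2) * exp (2 * (INR N - 1) * t).
Proof.
  intros HN Hp Hl Hv HM Hs Hst Ht.
  set (k := 2 * (INR N - 1)).
  set (dG := fun r => -( (-(INR N - 1) / r * (Derive v r * Derive v r)) * exp (k * r)
                          + (En p lam v r + lam * (M * M) / 2) * (exp (k * r) * k))).
  assert (H := mono_nonincr (fun r => - ((En p lam v r + lam * (M * M) / 2) * exp (k * r))) dG s t Hst).
  simpl in H. cut (- ((En p lam v t + lam * (M * M) / 2) * exp (k * t)) <=
                  - ((En p lam v s + lam * (M * M) / 2) * exp (k * s))). lra.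
  apply H.
  - intros x Hx. unfold dG.
    apply (is_derive_opp (fun r => (En p lam v r + lam * (M * M) / 2) * exp (k * r))).
    apply (dmult (fun r => En p lam v r + lam * (M * M) / 2) (fun r => exp (k * r))).
    + apply dext with (-(INR N - 1) / x * (Derive v x * Derive v x) + 0).
      apply dplus. apply (En_deriv N). exact Hp. exact Hv. lra. apply dconst. ring.
    + auto_derive. auto. ring.
  - intros x Hx. unfold dG.
    destruct (sol_facts N p lam v Hv x ltac:(lra)) as [_ [_ [H3 _]]].
    assert (HvM : v x <= M) by (apply HM; lra).
    assert (Hk : 2 <= k) by (unfold k; assert (Hq := INR_N1 N HN); lra).
    assert (He : 0 < exp (k * x)) by apply exp_pos.
    assert (Hr : 0 < Rpower (v x) p) by apply Rpower_pos.
    assert (HN1 := INR_N1 N HN).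
    assert (Hsum : 0 <= (INR N - 1) * (Derive v x * Derive v x) * (1 - 1 / x)
                 + k * (Rpower (v x) p / p + lam * (M * M - v x * v x) / 2)).
    { apply Rplus_le_le_0_compat.
      apply Rmult_le_pos. apply Rmult_le_pos. lra. nra.
      assert (1 / x < 1). { apply (Rmult_lt_reg_r x). lra. field_simplify; lra. } lra.
      apply Rmult_le_pos. lra.
      apply Rplus_le_le_0_compat. apply Rdiv_le_0_compat; lra.
      apply Rdiv_le_0_compat. 2: lra. apply Rmult_le_pos. lra. nra. }
    assert (Heq : -(-(INR N - 1) / x * (Derive v x * Derive v x) * exp (k * x) +
                    (En p lam v x + lam * (M * M) / 2) * (exp (k * x) * k))
                  = - exp (k * x) * ((INR N - 1) * (Derive v x * Derive v x) * (1 - 1 / x)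
                 + k * (Rpower (v x) p / p + lam * (M * M - v x * v x) / 2))).
    { unfold En, k. field. lra. }
    rewrite Heq. nra.
Qed.

Lemma En_r0 p lam v r0 : Derive v r0 = 0 ->
  En p lam v r0 = Rpower (v r0) p / p - lam * (v r0 * v r0) / 2.
Proof. intro H. unfold En. rewrite H. unfold Rdiv. ring. Qed.

Lemma v1_bound N p lam v r0 : (2 <= N)%nat -> 2 < p -> 0 < lam -> radial_pos_solution N p lam v ->
  1 < r0 < 2 -> (forall r, 1 < r < 2 -> v r <= v r0) -> Derive v r0 = 0 ->
  forall r, 1 < r < 2 ->
  Derive v r * Derive v r <= 2 * exp (2 * (INR N - 1)) * Rpower (v r0) p.
Proof.
  intros HN Hp Hl Hv Hr0 Hmax Hd0 r Hr.
  set (M := v r0).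
  destruct (sol_facts N p lam v Hv r Hr) as [_ [_ [H3 _]]].
  assert (HvM : v r <= M) by (apply Hmax; lra).
  assert (HRp : 0 < Rpower (v r) p) by apply Rpower_pos.
  assert (HMp : 0 < Rpower M p) by apply Rpower_pos.
  assert (HN1 := INR_N1 N HN).
  assert (Hk1 : 1 <= exp (2 * (INR N - 1))).
  { apply Rle_trans with (exp 0). rewrite exp_0; lra.
    left. apply exp_increasing. lra. }
  assert (HH0 : En p lam v r0 + lam * (M * M) / 2 <= Rpower M p).
  { rewrite En_r0 by exact Hd0. fold M.
    assert (Rpower M p / p <= Rpower M p).
    { unfold Rdiv. rewrite <- (Rmult_1_r (Rpower M p)) at 2. apply Rmult_le_compat_l. lra.
      rewrite <- Rinv_1. apply Rinv_le_contravar; lra. }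
    lra. }
  assert (Hsq : Derive v r * Derive v r <= 2 * (En p lam v r + lam * (M * M) / 2)).
  { unfold En. assert (0 <= Rpower (v r) p / p) by (apply Rdiv_le_0_compat; lra).
    assert (v r * v r <= M * M) by nra. nra. }
  destruct (Rle_lt_dec r0 r) as [Hle|Hlt].
  - assert (En p lam v r <= En p lam v r0) by (apply (En_noninc N p lam v r0 r HN Hp Hv); lra).
    assert (Rpower M p <= exp (2 * (INR N - 1)) * Rpower M p) by nra.
    lra.
  - assert (HG := G_nondec N p lam v M r r0 HN Hp Hl Hv ltac:(intros; apply Hmax; lra) ltac:(lra) ltac:(lra) ltac:(lra)).
    set (k := 2 * (INR N - 1)) in *.
    assert (Hekr : exp (k * r0) = exp (k * r) * exp (k * (r0 - r))) by (rewrite <- exp_plus; f_equal; ring).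
    assert (Hek : exp (k * (r0 - r)) <= exp k).
    { assert (Hk : 2 <= k) by (unfold k; lra). destruct (Req_dec (k * (r0 - r)) k) as [E|E]. rewrite E. lra. left. apply exp_increasing. nra. }
    assert (Hpos : 0 < exp (k * r)) by apply exp_pos.
    assert (Hpos2 : 0 < exp (k * (r0 - r))) by apply exp_pos.
    assert (HH0' : 0 <= En p lam v r0 + lam * (M * M) / 2).
    { rewrite En_r0 by exact Hd0. fold M. assert (0 <= Rpower M p / p) by (apply Rdiv_le_0_compat; lra). nra. }
    rewrite Hekr in HG.
    assert (En p lam v r + lam * (M * M) / 2 <= (En p lam v r0 + lam * (M * M) / 2) * exp (k * (r0 - r))).
    { apply (Rmult_le_reg_r (exp (k * r))). exact Hpos. nra. }
    assert ((En p lam v r0 + lam * (M * M) / 2) * exp (k * (r0 - r)) <= Rpower M p * exp k).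
    { apply Rmult_le_compat; lra. }
    lra.
Qed.

Lemma phiM N p lam v r0 : (2 <= N)%nat -> 2 < p -> 0 < lam -> radial_pos_solution N p lam v ->
  1 < r0 < 2 -> (forall r, 1 < r < 2 -> v r <= v r0) -> Derive v r0 = 0 ->
  lam * (v r0 * v r0) / 2 <= Rpower (v r0) p / p.
Proof.
  intros HN Hp Hl Hv Hr0 Hmax Hd0.
  set (M := v r0). set (phi := Rpower M p / p - lam * (M * M) / 2).
  apply Rnot_lt_le. intro Hneg.
  assert (Hphi : phi < 0) by (unfold phi; lra).
  set (eta := Rmin 1 (- phi / lam)).
  assert (Heta : 0 < eta) by (apply Rmin_pos; [lra| apply Rdiv_lt_0_compat; lra]).
  assert (Heta1 : eta <= 1) by apply Rmin_l.
  assert (Heta2 : eta <= - phi / lam) by apply Rmin_r.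
  assert (Heta3 : lam * eta <= - phi).
  { apply (Rmult_le_compat_l lam) in Heta2. 2: lra. unfold Rdiv in Heta2. rewrite <- Rmult_assoc in Heta2.
    rewrite (Rmult_comm lam (- phi)) in Heta2. rewrite Rmult_assoc, Rinv_r in Heta2 by lra. lra. }
  destruct (lim_at2 N p lam v Hv eta Heta) as [b [Hb Hb']].
  set (x := (Rmax b r0 + 2) / 2).
  assert (Hx1 : Rmax b r0 < x < 2).
  { unfold x. assert (Rmax b r0 < 2) by (apply Rmax_lub_lt; lra). lra. }
  assert (Hbx : b <= x) by (assert (H := Rmax_l b r0); lra).
  assert (Hrx : r0 <= x) by (assert (H := Rmax_r b r0); lra).
  assert (Hvx : v x < eta) by (apply Hb'; lra).
  destruct (sol_facts N p lam v Hv x ltac:(lra)) as [_ [_ [H3 _]]].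
  assert (HE : En p lam v x <= En p lam v r0) by (apply (En_noninc N p lam v r0 x HN Hp Hv); lra).
  rewrite (En_r0 p lam v r0 Hd0) in HE.
  unfold En in HE.
  assert (0 <= Rpower (v x) p / p) by (apply Rdiv_le_0_compat; [left; apply Rpower_pos| lra]).
  assert (0 <= Derive v x * Derive v x / 2) by nra.
  assert (v x * v x < eta) by nra.
  assert (lam * (v x * v x) < lam * eta) by nra.
  unfold phi, M in *. lra.
Qed.


Lemma dneg (g : R -> R) (y dg : R) : is_derive g (-y) dg -> is_derive (fun z => g (-z)) y (- dg).
Proof.
  intro H. apply dext with (scal (-1) dg).
  apply (is_derive_comp g (fun z => -z) y). exact H. auto_derive; auto.
  change (scal (-1) dg) with (-1 * dg). ring.
Qed.

Definition alpha p := Rpower (/2) (p - 1).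
Definition Cst N := 2 * exp (2 * (INR N - 1)).
Definition D0 N := (INR N - 1) * sqrt (Cst N).
Definition cst p := alpha p / 64.
Definition Lst N p := Rmax 1 (Rmax (800 / alpha p) ((64 * D0 N / alpha p) ^ 2 + 1)).

Lemma Rpower_p2 M p : 0 < M -> Rpower M p = Rpower M (p - 2) * M * M.
Proof.
  intro H. replace p with (p - 2 + 1 + 1) at 1 by ring.
  rewrite !Rpower_split by exact H. ring.
Qed.

Lemma Rpower_p1 M p : 0 < M -> Rpower M (p - 1) = Rpower M (p - 2) * M.
Proof.
  intro H. replace (p - 1) with (p - 2 + 1) at 1 by ring.
  rewrite !Rpower_split by exact H. ring.
Qed.

Lemma main_bounds N p lam v : (2 <= N)%nat -> 2 < p -> 0 < lam -> radial_pos_solution N p lam v ->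
  exists M, Linf_norm v = M /\ 0 < M /\ lam <= Rpower M (p - 2) /\
    (Lst N p <= lam -> cst p * Rpower M (p - 2) <= lam).
Proof.
  intros HN Hp Hl Hv.
  destruct (max_exists N p lam v Hv) as [r0 [Hr0 Hmax]].
  assert (Hd0 := deriv_zero_max N p lam v r0 Hv Hr0 Hmax).
  set (M := v r0).
  assert (HM : 0 < M) by (apply (sol_facts N p lam v Hv); lra).
  assert (Hpos : forall r, 1 < r < 2 -> 0 < v r) by (intros; apply (sol_facts N p lam v Hv); lra).
  exists M.
  set (X := Rpower M (p - 2)).
  assert (HX : 0 < X) by apply Rpower_pos.
  assert (HMp : Rpower M p = X * M * M) by (apply Rpower_p2; exact HM).
  assert (HlX : lam <= X).
  { assert (H := phiM N p lam v r0 HN Hp Hl Hv Hr0 Hmax Hd0). fold M in H. rewrite HMp in H.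
    assert (lam * (M * M) * p <= 2 * (X * M * M)).
    { apply (Rmult_le_compat_r (2 * p)) in H. 2: lra.
      replace (X * M * M / p * (2 * p)) with (2 * (X * M * M)) in H by (field; lra).
      lra. }
    assert (lam * p <= 2 * X) by (apply (Rmult_le_reg_r (M * M)); nra).
    nra. }
  split. apply Linf_eq. exact Hr0. exact HM. intros r Hr. split. apply Hpos; exact Hr. apply Hmax; exact Hr.
  split. exact HM. split. exact HlX.
  intro HL.
  apply Rnot_lt_le. intro Hc.
  set (a := alpha p). assert (Ha : 0 < a) by apply Rpower_pos.
  set (C := Cst N). assert (HC : 0 < C) by (unfold C, Cst; assert (H := exp_pos (2 * (INR N - 1))); lra).
  assert (HN1 := INR_N1 N HN).
  set (s := sqrt X).
  assert (Hs : 0 < s) by (apply sqrt_lt_R0; exact HX).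
  assert (Hss : s * s = X) by (apply sqrt_sqrt; lra).
  set (D := D0 N).
  assert (HD : 0 <= D) by (unfold D, D0; apply Rmult_le_pos; [lra | apply sqrt_pos]).
  assert (HL1 : 800 / a <= lam).
  { eapply Rle_trans. 2: exact HL. unfold Lst. eapply Rle_trans. 2: apply Rmax_r. apply Rmax_l. }
  assert (HL2 : (64 * D / a) ^ 2 + 1 <= lam).
  { eapply Rle_trans. 2: exact HL. unfold Lst. eapply Rle_trans. 2: apply Rmax_r. apply Rmax_r. }
  set (y1 := lam / X). set (y2 := D / s).
  assert (Hy1 : y1 < a / 64).
  { unfold y1, cst in *. fold a in Hc. apply (Rmult_lt_reg_r X). exact HX. unfold Rdiv. rewrite Rmult_assoc, Rinv_l by lra. lra. }
  assert (Hy2 : y2 < a / 64).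
  { unfold y2. apply (Rmult_lt_reg_r s). exact Hs. unfold Rdiv. rewrite Rmult_assoc, Rinv_l by lra.
    rewrite Rmult_1_r. apply Rnot_le_lt. intro Hle.
    assert (Hq : s <= 64 * D / a).
    { apply (Rmult_le_reg_l (a / 64)). lra. replace (a / 64 * (64 * D / a)) with D by (field; lra). lra. }
    assert (0 <= 64 * D / a) by (apply Rdiv_le_0_compat; lra).
    assert (s * s <= (64 * D / a) ^ 2) by (simpl; nra).
    lra. }
  assert (Hy1p : 0 < y1) by (unfold y1; apply Rdiv_lt_0_compat; lra).
  assert (Hy2p : 0 <= y2) by (unfold y2; apply Rdiv_le_0_compat; lra).
  assert (Hlam : lam = y1 * X) by (unfold y1; field; lra).
  assert (HDs : D = y2 * s) by (unfold y2; field; lra).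
  set (b := 4 / a).
  set (d := sqrt b / s).
  assert (Hb : 0 < b) by (unfold b; apply Rdiv_lt_0_compat; lra).
  assert (Hd : 0 < d) by (unfold d; apply Rdiv_lt_0_compat; [apply sqrt_lt_R0; lra | lra]).
  assert (Hdd : d * d = b / X).
  { unfold d. rewrite <- Hss. field_simplify. 2: lra. rewrite Rdiv_def, Rdiv_def. f_equal. rewrite <- Rsqr_pow2. apply Rsqr_sqrt. lra. lra. }
  assert (Hd10 : d < 1 / 10).
  { assert (b / X <= 1 / 200).
    { unfold b. apply (Rmult_le_reg_r X). exact HX. replace (4 / a / X * X) with (4 / a) by (field; lra).
      assert (800 / a <= X) by lra.
      assert (4 / a = (800 / a) / 200) by (field; lra). lra. }
    nra. }
  assert (Hw1 : forall r, 1 < r < 2 -> Rabs (Derive v r) <= sqrt C * s * M).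
  { intros r Hr. assert (H := v1_bound N p lam v r0 HN Hp Hl Hv Hr0 Hmax Hd0 r Hr).
    fold M in H. rewrite HMp in H. fold (Cst N) in H. fold C in H.
    assert (Hsc : sqrt C * sqrt C = C) by (apply sqrt_sqrt; lra).
    assert (0 <= sqrt C) by apply sqrt_pos.
    assert (Hsq : Derive v r * Derive v r <= (sqrt C * s * M) * (sqrt C * s * M)).
    { replace (sqrt C * s * M * (sqrt C * s * M)) with ((sqrt C * sqrt C) * (s * s) * M * M) by ring.
      rewrite Hsc, Hss. nra. }
    assert (HY : 0 <= sqrt C * s * M) by (apply Rmult_le_pos; [apply Rmult_le_pos|]; lra).
    unfold Rabs. destruct (Rcase_abs (Derive v r)); nra. }
  assert (Hdamp : forall r, 1 < r < 2 -> - ((INR N - 1) / r * Derive v r) <= D * s * M).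
  { intros r Hr. assert (H := Hw1 r Hr).
    assert (Hr1 : 0 < / r <= 1).
    { split. apply Rinv_0_lt_compat; lra. rewrite <- Rinv_1. apply Rinv_le_contravar; lra. }
    assert (Habs := Rabs_maj2 (Derive v r)).
    assert (Hsv := Rabs_pos (Derive v r)).
    unfold D, D0. fold C. unfold Rdiv.
    assert (- (INR N - 1) * / r * Derive v r <= (INR N - 1) * Rabs (Derive v r)).
    { assert (0 <= (INR N - 1) * / r) by nra.
      assert ((INR N - 1) * / r * (- Derive v r) <= (INR N - 1) * / r * Rabs (Derive v r)) by nra.
      assert ((INR N - 1) * / r * Rabs (Derive v r) <= (INR N - 1) * Rabs (Derive v r)).
      { rewrite (Rmult_comm (INR N - 1) (/ r)), Rmult_assoc. rewrite <- (Rmult_1_l ((INR N - 1) * Rabs (Derive v r))) at 2. apply Rmult_le_compat_r. apply Rmult_le_pos; lra. lra. }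
      lra. }
    assert ((INR N - 1) * Rabs (Derive v r) <= (INR N - 1) * (sqrt C * s * M)) by nra.
    lra. }
  set (K := lam * M + D * s * M).
  set (Q := a * X * M - lam * M - D * s * M).
  assert (HK : forall r, 1 < r < 2 -> Derive (Derive v) r <= K).
  { intros r Hr. destruct (sol_facts N p lam v Hv r Hr) as [_ [_ [H3 H4]]]. rewrite H4.
    assert (H := Hdamp r Hr). assert (0 < Rpower (v r) (p - 1)) by apply Rpower_pos.
    assert (v r <= M) by (apply Hmax; lra). unfold K. nra. }
  assert (HQ : forall r, 1 < r < 2 -> M / 2 <= v r -> Derive (Derive v) r <= - Q).
  { intros r Hr Hh. destruct (sol_facts N p lam v Hv r Hr) as [_ [_ [H3 H4]]]. rewrite H4.
    assert (H := Hdamp r Hr).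
    assert (v r <= M) by (apply Hmax; lra).
    assert (Hpw : a * X * M <= Rpower (v r) (p - 1)).
    { rewrite Rmult_assoc. unfold X. rewrite <- (Rpower_p1 M p HM). unfold a, alpha.
      rewrite Rpower_mult_distr by lra.
      apply Rle_Rpower_l. lra. split. nra. lra. }
    unfold Q. nra. }
  assert (HQd : M < Q * d * d).
  { rewrite Rmult_assoc, Hdd. unfold Q. rewrite Hlam, HDs, <- Hss.
    replace ((a * (s * s) * M - y1 * (s * s) * M - y2 * s * s * M) * (b / (s * s)))
      with (M * (a * b - b * (y1 + y2))) by (field; lra).
    assert (a * b = 4) by (unfold b; field; lra).
    assert (b * (y1 + y2) < b * (a / 32)) by (apply Rmult_lt_compat_l; lra).
    assert (b * (a / 32) = 1 / 8) by (unfold b; field; lra).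
    nra. }
  assert (HKd : 8 * K * d * d < M).
  { rewrite Rmult_assoc, Hdd. unfold K. rewrite Hlam, HDs, <- Hss.
    replace (8 * (y1 * (s * s) * M + y2 * s * s * M) * (b / (s * s)))
      with (M * (8 * b * (y1 + y2))) by (field; lra).
    assert (b * (y1 + y2) < b * (a / 32)) by (apply Rmult_lt_compat_l; lra).
    assert (b * (a / 32) = 1 / 8) by (unfold b; field; lra).
    nra. }
  destruct (Rle_lt_dec r0 (3/2)) as [Hr3|Hr3].
  - destruct (hit v (Derive v) (Derive (Derive v)) r0 d M K Q Hd HM) as [x [Hx Hvx]].
    + intros x Hx. destruct (sol_facts N p lam v Hv x ltac:(lra)) as [H1 [H2 _]]. split; assumption.
    + intros x Hx. apply Hmax. lra.
    + reflexivity.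
    + exact Hd0.
    + intros x Hx. apply HK. lra.
    + intros x Hx. apply HQ. lra.
    + exact HQd.
    + exact HKd.
    + assert (0 < v x) by (apply Hpos; lra). lra.
  - destruct (hit (fun y => v (- y)) (fun y => - Derive v (- y)) (fun y => Derive (Derive v) (- y))
                (- r0) d M K Q Hd HM) as [x [Hx Hvx]].
    + intros x Hx. destruct (sol_facts N p lam v Hv (- x) ltac:(lra)) as [H1 [H2 _]]. split.
      apply dneg. exact H1.
      apply dext with (- - Derive (Derive v) (- x)).
      apply (is_derive_opp (fun y => Derive v (- y))). apply dneg. exact H2. ring.
    + intros x Hx. apply Hmax. lra.
    + simpl. rewrite Ropp_involutive. reflexivity.
    + simpl. rewrite Ropp_involutive, Hd0. ring.
    + intros x Hx. apply HK. lra.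
    + intros x Hx. apply HQ. lra.
    + exact HQd.
    + exact HKd.
    + assert (0 < v (- x)) by (apply Hpos; lra). simpl in Hvx. lra.
Qed.


Theorem lemma2p3 (N : nat) (p : R) (u : R -> R -> R)
  (HN : (2 <= N)%nat) (Hp : subcritical N p)
  (Hu : forall lam, 0 < lam -> radial_pos_solution N p lam (u lam)) :
  (exists c, 0 < c /\ exists L, forall lam, L <= lam ->
       c <= lam / Rpower (Linf_norm (u lam)) (p - 2)) /\
  (forall eps, 0 < eps -> exists L, forall lam, L <= lam ->
       lam / Rpower (Linf_norm (u lam)) (p - 2) <= 1 + eps).
Proof.
  destruct Hp as [Hp2 _].
  split.
  - exists (cst p). split. unfold cst. apply Rdiv_lt_0_compat. apply Rpower_pos. lra.
    exists (Lst N p). intros lam HL.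
    assert (Hl : 0 < lam).
    { assert (1 <= Lst N p) by (unfold Lst; apply Rmax_l). lra. }
    destruct (main_bounds N p lam (u lam) HN Hp2 Hl (Hu lam Hl)) as [M [HLi [HM [H1 H2]]]].
    rewrite HLi. assert (HX : 0 < Rpower M (p - 2)) by apply Rpower_pos.
    apply (Rmult_le_reg_r (Rpower M (p - 2))). exact HX.
    unfold Rdiv. rewrite Rmult_assoc, Rinv_l by lra. rewrite Rmult_1_r. apply H2. exact HL.
  - intros eps He. exists 1. intros lam Hl1.
    assert (Hl : 0 < lam) by lra.
    destruct (main_bounds N p lam (u lam) HN Hp2 Hl (Hu lam Hl)) as [M [HLi [HM [H1 H2]]]].
    rewrite HLi. assert (HX : 0 < Rpower M (p - 2)) by apply Rpower_pos.
    apply Rle_trans with 1. 2: lra.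
    apply (Rmult_le_reg_r (Rpower M (p - 2))). exact HX.
    unfold Rdiv. rewrite Rmult_assoc, Rinv_l by lra. lra.
Qed.
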